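(* Let $d>1$ be a divisor of $n$ and let $A$ be the Dickson matrix of a $q$-polynomial $f\in\mathbb{F}_{q^n}[x]$ which is Loewy-reducible with respect to the partition $\{d\mathbb{Z}_n,\mathbb{Z}_n\setminus d\mathbb{Z}_n\}$, where $d\mathbb{Z}_n=\{0,d,\dots,n-d\}$. Then $f(x)=f'(x)+\lambda\sum_{i=1}^{d-1}b_i\,Tr_{q^n|q^d}(ax)^{q^i}$ for some $\lambda,a\in\mathbb{F}_{q^n}^*$, some $b_1,\dots,b_{d-1}\in\mathbb{F}_{q^d}$ not all zero, and some $\mathbb{F}_{q^d}$-linear map $f'$ of $\mathbb{F}_{q^n}$.
   Context: The Dickson matrix of $f(x)=\sum_{j=0}^{n-1}a_jx^{q^j}$ is the $n\times n$ matrix indexed by $\mathbb{Z}_n$ with $A[i|j]=a_{j-i}^{q^i}$. $A$ is Loewy-reducible with respect to a partition $\{\alpha,\beta\}$ of $\mathbb{Z}_n$ if $|\alpha|,|\beta|\ge2$ and $\mathrm{rank}\,A[\alpha|\beta]=\mathrm{rank}\,A[\beta|\alpha]=1$ ($A[\alpha|\beta]$: rows $\alpha$, columns $\beta$). $Tr_{q^n|q^d}(x)=x+x^{q^d}+\dots+x^{q^{n-d}}$. *)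

(* Defs.v *)
From HB Require Import structures.
From mathcomp Require Import all_boot all_order all_algebra all_field.
Set Implicit Arguments. Unset Strict Implicit. Unset Printing Implicit Defensive.
Import GRing.Theory.
Local Open Scope ring_scope.

(* q-polynomial f(x) = sum_{j<n} a_j x^{q^j}; coefficients a_0..a_{n-1}
   given by a : nat -> F (values beyond n-1 are irrelevant). *)
Definition qpoly_eval (F : fieldType) (q n : nat) (a : nat -> F) (x : F) : F :=
  \sum_(j < n) a j * x ^+ (q ^ j).

Definition dickson (F : fieldType) (q n : nat) (a : nat -> F) : 'M[F]_n :=
  \matrix_(i < n, j < n) (a ((j + n - i) %% n)%N) ^+ (q ^ i).

(* the submatrix A[alpha|beta]: rows in alpha, columns in beta (in increasing order) *)
Definition submx (F : fieldType) (n : nat) (A : 'M[F]_n) (al be : {set 'I_n}) :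
  'M[F]_(#|al|, #|be|) :=
  mxsub (fun k : 'I_#|al| => enum_val k) (fun l : 'I_#|be| => enum_val l) A.

Definition loewy_reducible (F : fieldType) (n : nat) (A : 'M[F]_n)
  (al : {set 'I_n}) : Prop :=
  (2 <= #|al|)%N /\ (2 <= #|~: al|)%N /\
  \rank (submx A al (~: al)) = 1%N /\ \rank (submx A (~: al) al) = 1%N.

Definition dZn (n d : nat) : {set 'I_n} := [set i : 'I_n | (d %| i)%N].

Definition trace_rel (F : fieldType) (q n d : nat) (x : F) : F :=
  \sum_(k < n %/ d) x ^+ (q ^ (d * k)).

Definition in_sub (F : fieldType) (q d : nat) (c : F) : Prop := c ^+ (q ^ d) = c.

Definition sublinear (F : fieldType) (q d : nat) (g : F -> F) : Prop :=
  (forall x y, g (x + y) = g x + g y) /\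
  (forall c x, in_sub q d c -> g (c * x) = c * g x).

(* Main.v *)
Require Import Defs.
From HB Require Import structures.
From mathcomp Require Import all_boot all_order all_algebra all_field.
Import GRing.Theory.
Local Open Scope ring_scope.
From mathcomp Require Import ring zify.
Set Implicit Arguments. Unset Strict Implicit.

Lemma rank1_factor (F : fieldType) m n (M : 'M[F]_(m,n)) :
  \rank M = 1%N -> exists u : 'I_m -> F, exists v : 'I_n -> F, forall i j, M i j = u i * v j.
Proof.
move=> r1.
exists (fun i => \sum_(k : 'I_m) col_ebase M i k * ((k < 1)%N%:R)).
exists (fun j => \sum_(l : 'I_n) ((l < 1)%N%:R) * row_ebase M l j).
move=> i j; rewrite -{1}(mulmx_ebase M) r1 mxE big_distrlr /=.
rewrite exchange_big /=; apply: eq_bigr => l _; rewrite mxE big_distrl /=.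
apply: eq_bigr => k _; rewrite [pid_mx 1 _ _]mxE.
have -> : ((k == l :> nat) && (k < 1)%N) = ((k < 1)%N && (l < 1)%N).
  by case: k l => [[|k] hk] [[|l] hl]; rewrite /= ?andbF.
by case: (k < 1)%N; case: (l < 1)%N; rewrite /= ?mul0r ?mulr0 ?mulr1 ?mul1r ?mul0r ?mulr0.
Qed.

Lemma frob_sum (F : fieldType) (e : nat) (hadd : forall x y : F, (x + y) ^+ e = x ^+ e + y ^+ e)
  (e0 : (0 < e)%N) I (r : seq I) (G : I -> F) :
  (\sum_(i <- r) G i) ^+ e = \sum_(i <- r) G i ^+ e.
Proof.
elim: r => [|x r IH]; first by rewrite !big_nil expr0n eqn0Ngt e0.
by rewrite !big_cons hadd IH.
Qed.

Lemma hilbert90 (F : finFieldType) (q n d m : nat) (hF : #|F| = (q ^ n)%N)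
  (hq : (1 < q)%N) (hn : n = (d * m)%N) (hd : (0 < d)%N) (hm : (0 < m)%N)
  (hadd : forall x y : F, (x + y) ^+ (q ^ d) = x ^+ (q ^ d) + y ^+ (q ^ d))
  (nu : F) (hN : \prod_(t < m) nu ^+ (q ^ (d * t)) = 1) :
  exists z : F, z != 0 /\ z ^+ (q ^ d) = nu * z.
Proof.
have qd0 : (0 < q ^ d)%N by rewrite expn_gt0 (ltnW hq).
have expq : forall (x : F) a b, (x ^+ (q ^ a)) ^+ (q ^ b) = x ^+ (q ^ (a + b)).
  by move=> x a b; rewrite -exprM -expnD.
have xqn : forall x : F, x ^+ (q ^ n) = x by move=> x; rewrite -hF expf_card.
pose P k := \prod_(s < k) nu ^+ (q ^ (d * s)).
have nu0 : nu != 0.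
  apply/eqP => nu0; move: hN; case: m hm {hn} => // m' _.
  by rewrite big_ord_recl nu0 muln0 expn0 expr1 mul0r => /eqP; rewrite eq_sym oner_eq0.
have P0 : forall k, P k != 0.
  by move=> k; rewrite prodf_seq_neq0; apply/allP => s _; rewrite expf_neq0.
have PS : forall k, P k ^+ (q ^ d) = P k.+1 / nu.
  move=> k; rewrite /P big_ord_recl muln0 expn0 expr1 -prodrXl.
  rewrite [nu * _]mulrC mulrK ?unitfE //; apply: eq_bigr => s _; rewrite expq; congr (_ ^+ (q ^ _)).
  by rewrite /bump /= mulnS addnC.
have termS : forall th k, (th ^+ (q ^ (d * k)) / P k) ^+ (q ^ d)
    = nu * (th ^+ (q ^ (d * k.+1)) / P k.+1).
  move=> th k; rewrite expr_div_n PS expq addnC -mulnS.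
  have := P0 k.+1; move: (P k.+1) => Y Y0; field.
  by rewrite Y0 nu0.
pose x (th : F) := \sum_(k < m) th ^+ (q ^ (d * k)) / P k.
have xS : forall th, x th ^+ (q ^ d) = nu * x th.
  move=> th; rewrite /x frob_sum // mulr_sumr.
  have Pm : P m = 1 by [].
  case: m hm hn {hN x} Pm => // m' _ hn Pm.
  rewrite big_ord_recr big_ord_recl addrC /=; congr (_ + _).
    by apply: eq_bigr => k _; rewrite termS.
  by rewrite termS Pm divr1 -hn xqn /P big_ord0 muln0 expn0 expr1 divr1.
pose p : {poly F} := \sum_(k < m) (P k)^-1 *: 'X^(q ^ (d * k)).
have px : forall th, p.[th] = x th.
  move=> th; rewrite /p horner_sum; apply: eq_bigr => k _.
  by rewrite hornerZ hornerXn mulrC.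
have p1 : p`_1 = 1.
  rewrite /p coef_sum; clear px; case: m hm {hn hN x xS p} => // m' _.
  rewrite big_ord_recl big1 ?addr0.
    by rewrite coefZ coefXn muln0 expn0 eqxx mulr1 /P big_ord0 invr1.
  move=> k _; rewrite coefZ coefXn; case: eqP; last by rewrite mulr0.
  move/esym/eqP; rewrite -[X in _ == X](expn0 q) eqn_exp2l // muln_eq0.
  by rewrite (negbTE (lt0n_neq0 hd)).
have pn0 : p != 0 by apply/eqP => p0; move: p1; rewrite p0 coef0 => /eqP; rewrite eq_sym oner_eq0.
have psz : (size p <= (q ^ (d * m.-1)).+1)%N.
  rewrite /p (leq_trans (size_sum _ _ _)) //; apply/bigmax_leqP => k _.
  rewrite (leq_trans (size_scale_leq _ _)) // size_polyXn ltnS leq_exp2l //.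
  by rewrite leq_mul2l -ltnS prednK // ltn_ord orbT.
have : ~~ all (root p) (enum F).
  apply/negP => H; have := max_poly_roots pn0 H (enum_uniq _).
  rewrite -cardE hF hn => /leq_trans/(_ psz); rewrite ltnS leqNgt ltn_exp2l //.
  by rewrite ltn_pmul2l // prednK // leqnn.
case/allPn => th _; rewrite /root px => xth.
by exists (x th); split=> //; rewrite xS.
Qed.

Lemma submx_minor (F : fieldType) n (A : 'M[F]_n) (al be : {set 'I_n}) :
  \rank (Defs.submx A al be) = 1%N ->
  forall i i' j j', i \in al -> i' \in al -> j \in be -> j' \in be ->
  A i j * A i' j' = A i j' * A i' j.
Proof.
move=> /rank1_factor [u [v huv]] i i' j j' hi hi' hj hj'.
have E : forall x y (hx : x \in al) (hy : y \in be),
    A x y = u (enum_rank_in hx x) * v (enum_rank_in hy y).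
  move=> x y hx hy; rewrite -huv /Defs.submx mxE !enum_rankK_in //.
rewrite (E i j hi hj) (E i' j' hi' hj') (E i j' hi hj') (E i' j hi' hj); ring.
Qed.

Lemma submx_nz (F : fieldType) n (A : 'M[F]_n) (al be : {set 'I_n}) :
  \rank (Defs.submx A al be) = 1%N ->
  exists i j, [/\ i \in al, j \in be & A i j != 0].
Proof.
move=> r1; have Mnz : Defs.submx A al be != 0 by rewrite -mxrank_eq0 r1.
have /existsP[k /existsP[l hkl]] : [exists k, exists l, Defs.submx A al be k l != 0].
  apply: contraR Mnz => /existsPn H; apply/eqP/matrixP => k l.
  by have /existsPn/(_ l) := H k; rewrite negbK mxE [RHS]mxE => /eqP.
exists (enum_val k), (enum_val l); split; try exact: enum_valP.
by move: hkl; rewrite mxE.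
Qed.

Lemma sum_reindex (F : fieldType) (d m : nat) (G : nat -> F) :
  \sum_(j < d * m) G j = \sum_(k < m) \sum_(i < d) G (d * k + i)%N.
Proof.
elim: m => [|m IH]; first by rewrite muln0 !big_ord0.
rewrite big_ord_recr /= -IH -!(big_mkord xpredT) mulnS addnC.
rewrite (big_cat_nat _ (leq_addr d (d * m))) //=; congr (_ + _).
rewrite -{1}(add0n (d * m)%N) big_addn addKn big_mkord; apply: eq_bigr => i _; by rewrite addnC.
Qed.

Lemma frob_period (F : finFieldType) (q n : nat) (hF : #|F| = (q ^ n)%N) (x : F) a t :
  x ^+ (q ^ (a + n * t)%N) = x ^+ (q ^ a).
Proof.
elim: t => [|t IH]; first by rewrite muln0 addn0.
by rewrite mulnS addnCA expnD exprM -hF expf_card IH.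
Qed.

Lemma frob_mod (F : finFieldType) (q n : nat) (hF : #|F| = (q ^ n)%N) (x : F) r :
  x ^+ (q ^ r) = x ^+ (q ^ (r %% n)).
Proof. by rewrite {1}(divn_eq r n) addnC mulnC frob_period. Qed.

Lemma ar1 (u n d : nat) : (d <= n)%N -> (u + n - (n - d) = u + d)%N.
Proof. lia. Qed.
Lemma ar2 (n d : nat) : (0 < d)%N -> (0 < n)%N -> (n - d < n)%N.
Proof. lia. Qed.
Lemma ar3 (u n : nat) : (u < n)%N -> (n - (n - u) = u)%N.
Proof. lia. Qed.
Lemma ar4 (u v n : nat) : (u < n)%N -> (v + n - (n - u) = v + u)%N.
Proof. lia. Qed.

Lemma sum_reindex2 (F : fieldType) (n d m : nat) (G : nat -> F) :
  n = (d * m)%N -> \sum_(j < n) G j = \sum_(k < m) \sum_(i < d) G (d * k + i)%N.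
Proof. by move=> ->; apply: sum_reindex. Qed.

Unset Implicit Arguments. Set Strict Implicit.

Theorem mainTheorem13 (F : finFieldType) (q n d : nat)
  (hq : exists p k : nat, [/\ prime p, (0 < k)%N & q = (p ^ k)%N])
  (hF : #|F| = (q ^ n)%N)
  (hd1 : (1 < d)%N) (hdn : (d %| n)%N)
  (a : nat -> F)
  (hL : loewy_reducible (dickson q n a) (dZn n d)) :
  exists (lam c : F), lam != 0 /\ c != 0 /\
  exists b : nat -> F,
    (forall i, (1 <= i < d)%N -> in_sub q d (b i)) /\
    (exists i, (1 <= i < d)%N /\ b i != 0) /\
    exists f' : F -> F, sublinear q d f' /\
      forall x : F, qpoly_eval q n a x =
        f' x + lam * \sum_(1 <= i < d) b i * (trace_rel q n d (c * x)) ^+ (q ^ i).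
Proof.
case: hq => p [k [pp k0 qE]].
have hq1 : (1 < q)%N by rewrite qE -(expn0 p) ltn_exp2l ?prime_gt1.
case: hL => _ [_ [hr1 hr2]].
have [i0 [j0 [hi0 hj0 hA0]]] := submx_nz hr1.
have n0 : (0 < n)%N by case: i0 {hi0 hA0} => /= i0 /(leq_ltn_trans (leq0n i0)).
have hp : p \in [pchar F] by apply: (card_finPcharP (n := (k * n)%N)) => //; rewrite hF qE expnM.
have hadd : forall j (x y : F), (x + y) ^+ (q ^ j) = x ^+ (q ^ j) + y ^+ (q ^ j).
  move=> j x y; apply: exprDn_pchar.
  by rewrite (eq_pnat _ (pcharf_eq hp)) qE -expnM pnatX pnat_id.
have xqn : forall x : F, x ^+ (q ^ n) = x by move=> x; rewrite -hF expf_card.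
have expq : forall (x : F) u v, (x ^+ (q ^ u)) ^+ (q ^ v) = x ^+ (q ^ (u + v)).
  by move=> x u v; rewrite -exprM -expnD.
have d0 : (0 < d)%N := ltnW hd1.
set m := (n %/ d)%N.
have nE : n = (d * m)%N by rewrite mulnC divnK.
have m0 : (0 < m)%N by rewrite lt0n; apply/eqP => m00; move: n0; rewrite nE m00 muln0.
have dn : (d <= n)%N := dvdn_leq n0 hdn.
pose aa r := a (r %% n)%N.
have aa_mod : forall u v, (u = v %[mod n])%N -> aa u = aa v by move=> u v; rewrite /aa => ->.
have Aent : forall i j : 'I_n, dickson q n a i j = aa (j + n - i)%N ^+ (q ^ i).
  by move=> i j; rewrite /dickson mxE.
have inal : forall i : 'I_n, (i \in dZn n d) = (d %| i)%N by move=> i; rewrite inE.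
have dvd_mod : forall r, (d %| r %% n)%N = (d %| r)%N by move=> r; rewrite /dvdn (modn_dvdm _ hdn).
have notal : forall i : 'I_n, (i \in ~: dZn n d) = ~~ (d %| i)%N by move=> i; rewrite in_setC inal.
set r0 := ((j0 + n - i0) %% n)%N.
have hr0d : ~~ (d %| r0)%N.
  rewrite dvd_mod -addnBA ?(ltnW (ltn_ord i0)) // dvdn_addl -?notal //.
  by apply: dvdn_sub => //; rewrite -inal.
have r0lt : (r0 < n)%N := ltn_pmod _ n0.
have r0pos : (0 < r0)%N by rewrite lt0n; apply: contra hr0d => /eqP ->.
have har0 : aa r0 != 0.
  rewrite (aa_mod _ (j0 + n - i0)%N) ?modn_mod //.
  by move: hA0; rewrite Aent expf_eq0 negb_and => /orP [|//]; rewrite expn_gt0 (ltnW hq1).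
have R1 : forall r r', ~~ (d %| r)%N -> ~~ (d %| r')%N ->
    aa r ^+ (q ^ d) * aa (r' + d)%N = aa r' ^+ (q ^ d) * aa (r + d)%N.
  move=> r r' hr hr'.
  have ndn : (n - d < n)%N := ar2 d0 n0.
  have := submx_minor hr1 (i := Ordinal n0) (i' := Ordinal ndn)
     (j := Ordinal (ltn_pmod r n0)) (j' := Ordinal (ltn_pmod r' n0)).
  rewrite !inal !notal /= dvdn0 dvdn_sub // !dvd_mod hr hr' => /(_ isT isT isT isT).
  rewrite !Aent /= expn0 !expr1.
  have e1 : forall u, aa (u %% n + n - 0)%N = aa u.
    by move=> u; apply: aa_mod; rewrite subn0 modnDr modn_mod.
  have e2 : forall u, aa (u %% n + n - (n - d))%N = aa (u + d)%N.
    move=> u; apply: aa_mod.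
    by rewrite ar1 // modnDml.
  rewrite e1 e1 e2 e2 => /(congr1 (fun t => t ^+ (q ^ d))).
  by rewrite !exprMn !expq subnK // !xqn.
set W := aa r0 ^+ (q ^ (n - r0)).
set W' := aa (r0 + d)%N ^+ (q ^ (n - r0)).
have W0 : W != 0 by rewrite expf_neq0.
pose kap := W' / W.
have R2 : forall r, ~~ (d %| r)%N -> aa (r + d)%N = kap ^+ (q ^ r) * aa r.
  move=> r hr; set s := (r %% n)%N.
  have s0 : (0 < s)%N by rewrite lt0n; apply: contra hr => /eqP s0; rewrite -dvd_mod -/s s0.
  have sn : (s < n)%N := ltn_pmod _ n0.
  have i1 : (n - s < n)%N := ar2 s0 n0.
  have i2 : (n - r0 < n)%N := ar2 r0pos n0.
  have := submx_minor hr2 (i := Ordinal i1) (i' := Ordinal i2)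
     (j := Ordinal n0) (j' := Ordinal (ltn_pmod d n0)).
  rewrite !inal !notal /= dvdn0 dvd_mod dvdnn !dvdn_subr ?(ltnW sn) ?(ltnW r0lt) // dvd_mod hr hr0d.
  move=> /(_ isT isT isT isT).
  rewrite !Aent /=.
  have e1 : forall v, (v < n)%N -> aa (0 + n - (n - v))%N = aa v.
    by move=> v hv; rewrite add0n ar3.
  have e2 : forall v, (v < n)%N -> aa (d %% n + n - (n - v))%N = aa (v + d)%N.
    by move=> v hv; apply: aa_mod; rewrite ar4 // modnDml addnC.
  have es1 : aa s = aa r by apply: aa_mod; rewrite modn_mod.
  have es2 : aa (s + d)%N = aa (r + d)%N by apply: aa_mod; rewrite modnDml.
  have -> : kap ^+ (q ^ r) = W' ^+ (q ^ s) / W ^+ (q ^ s).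
    by rewrite (frob_mod hF kap r) /kap expr_div_n.
  have Ws : W ^+ (q ^ s) != 0 by rewrite expf_neq0.
  rewrite !e1 // !e2 // es1 es2 => /(congr1 (fun t => t ^+ (q ^ s))).
  rewrite !exprMn; move: Ws; move: (W ^+ (q ^ s)) (W' ^+ (q ^ s)) => X Y X0.
  rewrite !expq subnK ?(ltnW sn) // !xqn => E.
  by apply: (mulIf X0); rewrite -E [RHS]mulrAC divfK // mulrC.
have iter : forall t, aa (r0 + d * t)%N = (\prod_(s < t) kap ^+ (q ^ (r0 + d * s))) * aa r0.
  elim=> [|t IH]; first by rewrite muln0 addn0 big_ord0 mul1r.
  rewrite big_ord_recr /= mulnS (addnC d) addnA R2; last by rewrite dvdn_addl ?dvdn_mulr.
  rewrite IH; ring.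
have N1 : \prod_(t < m) kap ^+ (q ^ (d * t)) = 1.
  have := iter m; rewrite -nE (aa_mod _ r0) ?modnDr // => E.
  have P1 : \prod_(s < m) kap ^+ (q ^ (r0 + d * s)) = 1.
    by apply: (mulIf har0); rewrite mul1r -E.
  have H : (\prod_(t < m) kap ^+ (q ^ (d * t))) ^+ (q ^ r0) = 1.
    by rewrite -prodrXl -[RHS]P1; apply: eq_bigr => s _; rewrite expq addnC.
  by rewrite -[LHS]xqn -(subnK (ltnW r0lt)) addnC -expq H expr1n.
have [z [z0 zS]] := hilbert90 (nu := kap) hF hq1 nE d0 m0 (hadd d) N1.
have zq0 : forall u, z ^+ u != 0 by move=> u; rewrite expf_neq0.
have zq : forall u, z ^+ (q ^ (u + d)) = kap ^+ (q ^ u) * z ^+ (q ^ u).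
  by move=> u; rewrite addnC -expq zS exprMn.
have decomp : forall r t, ~~ (d %| r)%N ->
    aa (r + d * t)%N = aa r / z ^+ (q ^ r) * z ^+ (q ^ (r + d * t)).
  move=> r t hr; elim: t => [|t IH]; first by rewrite muln0 addn0 divfK.
  rewrite mulnS (addnC d) addnA R2; last by rewrite dvdn_addl ?dvdn_mulr.
  rewrite IH zq; ring.
pose e i := aa i / z ^+ (q ^ i).
have aeq : forall j, (j < n)%N -> ~~ (d %| j)%N -> a j = e (j %% d)%N * z ^+ (q ^ j).
  move=> j jn hj.
  have hjd : ~~ (d %| j %% d)%N by rewrite /dvdn modn_mod.
  have jE : (j %% d + d * (j %/ d))%N = j by rewrite mulnC addnC -divn_eq.
  by have := decomp (j %% d)%N (j %/ d)%N hjd; rewrite jE /aa modn_small.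
have erel : forall i, ~~ (d %| i)%N ->
    e i ^+ (q ^ d) * aa (r0 + d)%N = aa r0 ^+ (q ^ d) * e i.
  move=> i hi; have := R1 i r0 hi hr0d.
  have d1 := decomp i 1%N hi; rewrite muln1 in d1; rewrite d1.
  rewrite -{1}(divfK (zq0 (q ^ i)%N) (aa i)) exprMn expq => E.
  apply: (mulIf (zq0 (q ^ (i + d))%N)); rewrite mulrAC E /e; ring.
set i1 := (r0 %% d)%N.
have hi1 : ~~ (d %| i1)%N by rewrite /i1 /dvdn modn_mod.
have e0 : e i1 != 0.
  apply: contra har0 => /eqP h; apply/eqP.
  by rewrite /aa modn_small // (aeq r0 r0lt hr0d) -/i1 h mul0r.
have T0 : aa r0 ^+ (q ^ d) != 0 by rewrite expf_neq0.
have U0 : aa (r0 + d)%N != 0.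
  apply/eqP => U0; have := erel i1 hi1; rewrite U0 mulr0 => /eqP.
  by rewrite eq_sym mulf_eq0 (negbTE T0) (negbTE e0).
have bsub : forall i, ~~ (d %| i)%N -> (e i / e i1) ^+ (q ^ d) = e i / e i1.
  move=> i hi; rewrite expr_div_n.
  have Ei : forall i, ~~ (d %| i)%N -> e i ^+ (q ^ d) = aa r0 ^+ (q ^ d) * e i / aa (r0 + d)%N.
    by move=> i' hi'; rewrite -erel // mulfK.
  rewrite !Ei //; move: T0 U0 e0; move: (aa r0 ^+ (q ^ d)) (aa (r0 + d)%N) (e i1) (e i) => T U E X T0 U0 E0.
  by field; rewrite T0 U0 E0.
have ndiv : forall i, (0 < i < d)%N -> ~~ (d %| i)%N.
  move=> i /andP [h1 h2]; apply/negP => /(dvdn_leq h1); by rewrite leqNgt h2.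
exists (e i1), z; split => //; split => //.
exists (fun i => e i / e i1); split.
  by move=> i hi; apply: bsub; apply: ndiv.
split.
  exists i1; split; last by rewrite divff // oner_neq0.
  by rewrite ltn_pmod // andbT lt0n.
exists (fun x => \sum_(j < n | (d %| j)%N) a j * x ^+ (q ^ j)); split.
  split.
    by move=> x y; rewrite -big_split; apply: eq_bigr => j _; rewrite hadd mulrDr.
  move=> c x hc; rewrite mulr_sumr; apply: eq_bigr => j hj.
  have cfix : forall t, c ^+ (q ^ (d * t)) = c.
    elim=> [|t IH]; first by rewrite muln0 expn0 expr1.
    by rewrite mulnS addnC -expq IH hc.
  by rewrite exprMn -(divnK hj) mulnC cfix mulrCA.
move=> x; rewrite /qpoly_eval (bigID (fun j : 'I_n => (d %| j)%N)) /=; congr (_ + _).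
pose G j := if (d %| j)%N then 0 else e (j %% d)%N * (z * x) ^+ (q ^ j).
transitivity (\sum_(j < n) G j).
  rewrite big_mkcond /=; apply: eq_bigr => j _; rewrite /G.
  case: (boolP (d %| j)%N) => hj //=.
  by rewrite (aeq j (ltn_ord j) hj) exprMn mulrA.
rewrite (sum_reindex2 G nE) exchange_big /= -(big_mkord xpredT (fun i => \sum_(k < m) G (d * k + i)%N)).
rewrite big_ltn // big1 ?add0r; last first.
  by move=> kk _; rewrite /G addn0 dvdn_mulr.
rewrite mulr_sumr; apply: eq_big_nat => i hi.
rewrite /trace_rel -/m (frob_sum (hadd i)) ?expn_gt0 ?(ltnW hq1) //.
rewrite !mulr_sumr; apply: eq_bigr => kk _.
rewrite /G dvdn_addr ?dvdn_mulr // (negbTE (ndiv i hi)) expq.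
have -> : ((d * kk + i) %% d = i)%N.
  by rewrite mulnC modnMDl modn_small //; case/andP: hi.
by rewrite mulrA [e i1 * _]mulrC divfK.
Qed.
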